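(* For all non-negative integers $n$ and positive integers $k,m$, $$\det\Big(D_{2n+2j-2i}^{(2k+2m-1)}\Big)_{0\le i,j\le k-1}=(-1)^{km}\det\Big(D_{-2n-2j+2i-2k-2m}^{(2k+2m-1)}\Big)_{0\le i,j\le m-1}.$$
   Context: For $N\ge0$ and $0\le r,s\le K$, $C_N^{(K)}(r\to s)$ is the number of lattice paths with steps $(1,1),(1,-1)$ from $(0,r)$ to $(N,s)$ never below the $x$-axis nor above $y=K$. For odd $K$, $F(x)=\sum_{N\ge0}C_N^{(K)}(r\to s)x^N$ is rational $p/q$ with $\deg p<\deg q$, $q(0)\ne0$, and for negative $N$, $C_N^{(K)}(r\to s)$ is defined by $\sum_{N\ge1}C_{-N}^{(K)}(r\to s)x^N=-F(1/x)$ (equivalently by running the linear recurrence backwards); thus $C_N^{(K)}(r\to s)$ is defined for all integers $N$, and equals the path count for $N\ge0$. For all integers $n$, $D_{2n}^{(K)}:=C_{2n+K}^{(K)}(0\to K)$. *)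

(* Defs.v *)
From mathcomp Require Import all_boot all_order all_algebra.
Set Implicit Arguments. Unset Strict Implicit. Unset Printing Implicit Defensive.
Import Order.TTheory GRing.Theory Num.Theory.
Local Open Scope ring_scope.

(* Number of lattice paths with steps (1,1),(1,-1) from (0,r) to (N,s) that
   stay in the strip 0 <= y <= K.  A path is the sequence of its heights
   y_0,...,y_N, each in {0,...,K} (type 'I_K.+1). *)
Definition pathcount (K N r s : nat) : nat :=
  #|[set y : {ffun 'I_N.+1 -> 'I_K.+1} |
      [&& val (y ord0) == r, val (y ord_max) == s &
          [forall i : 'I_N,
             let a := val (y (widen_ord (leqnSn N) i)) in
             let b := val (y (lift ord0 i)) in
             (a.+1 == b) || (b.+1 == a)]]]|.

Definition transfer (K : nat) : 'M[rat]_K.+1 :=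
  \matrix_(i, j) (if ((i : nat).+1 == j) || ((j : nat).+1 == i) then 1 else 0).

(* For N >= 0 it is the
   path count; for N = -(n+1) < 0 it is the (r,s) entry of (A^{-1})^{n+1},
   A = transfer K, which is exactly the coefficient given by -F(1/x). *)
Definition C (K : nat) (N : int) (r s : nat) : rat :=
  match N with
  | Posz n => (pathcount K n r s)%:R
  | Negz n => ((invmx (transfer K)) ^+ n.+1) (inord r) (inord s)
  end.

Definition D (K : nat) (t : int) : rat := C K (t + (K : int)) 0 K.

(* Main.v *)
Require Import Defs.
From mathcomp Require Import all_boot all_order all_algebra.
From mathcomp Require Import zify ring lra.
Import GRing.Theory Num.Theory.
Local Open Scope ring_scope.
Set Implicit Arguments. Unset Strict Implicit. Unset Printing Implicit Defensive.

Section Paths.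
Variable K : nat.
Notation T := 'I_K.+1.

Definition adjb (a b : nat) := (a.+1 == b) || (b.+1 == a).

Definition steps N (y : {ffun 'I_N.+1 -> T}) :=
  [forall i : 'I_N, adjb (y (widen_ord (leqnSn N) i)) (y (lift ord0 i))].

Lemma pathcountE N r s : pathcount K N r s =
  (\sum_(y : {ffun 'I_N.+1 -> T}) [&& val (y ord0) == r, val (y ord_max) == s & steps y])%N.
Proof.
rewrite /pathcount -sum1_card big_mkcond /=; apply: eq_bigr => y _.
by rewrite inE /steps /adjb; case: ifP.
Qed.

Definition ext N (y : {ffun 'I_N.+1 -> T}) (t : T) : {ffun 'I_N.+2 -> T} :=
  [ffun i : 'I_N.+2 => if (i < N.+1)%N then y (inord i) else t].
Definition res N (z : {ffun 'I_N.+2 -> T}) :=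
  ([ffun j : 'I_N.+1 => z (inord j)], z ord_max).

Lemma ffun_inord N (y : {ffun 'I_N.+1 -> T}) (i : 'I_N.+1) : y (inord i) = y i.
Proof. by rewrite inord_val. Qed.

Lemma ext_bij N : bijective (fun p : {ffun 'I_N.+1 -> T} * T => ext p.1 p.2).
Proof.
exists (@res N).
  move=> [y t]; rewrite /res /ext /=; congr pair.
    apply/ffunP => j; rewrite !ffunE inordK ?ltn_ord // ?ffun_inord //.
    by apply: (leq_trans (ltn_ord j)).
  by rewrite ffunE /= ltnn.
move=> z; rewrite /res /ext /=; apply/ffunP => i; rewrite !ffunE.
case: ifP => hi.
  congr (z _); apply: val_inj; rewrite /= !inordK //.
congr (z _); apply: val_inj => /=.
have := ltn_ord i; move: hi; rewrite /=; lia.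
Qed.

Lemma steps_ext N (y : {ffun 'I_N.+1 -> T}) t :
  steps (ext y t) = steps y && adjb (y ord_max) t.
Proof.
rewrite /steps /ext; apply/forallP/andP => [H|[/forallP H1 H2] i].
  split.
    apply/forallP => j; have := H (inord j).
    rewrite !ffunE /= !inordK; last first.
      by apply: (leq_trans (ltn_ord j)).
    have hj := ltn_ord j; rewrite /bump leq0n add1n !ifT; try lia.
    have -> : y (widen_ord (leqnSn N) j) = y (inord j).
      by congr (y _); apply: val_inj; rewrite /= inordK // ltnW ?ltnS.
    have -> : y (lift ord0 j) = y (inord j.+1).
      by congr (y _); apply: val_inj; rewrite /= inordK // ltnS.
    by [].
  have := H ord_max; rewrite !ffunE /= ltnn ltnSn.
  have -> : y (inord N) = y ord_max by congr (y _); apply: val_inj; rewrite /= inordK.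
  by [].
rewrite !ffunE /= /bump leq0n add1n.
have hi := ltn_ord i.
case: (ltnP i N) => hiN.
  have := H1 (Ordinal hiN).
  have -> : y (widen_ord (leqnSn N) (Ordinal hiN)) = y (inord i).
    by congr (y _); apply: val_inj; rewrite /= inordK // ltnW.
  have -> : y (lift ord0 (Ordinal hiN)) = y (inord i.+1).
    by congr (y _); apply: val_inj; rewrite /= /bump leq0n add1n inordK.
  by rewrite !ifT //; lia.
have eiN : i = N :> nat by apply/eqP; rewrite eqn_leq hiN -ltnS hi.
rewrite eiN ltnSn ltnn.
have -> : y (inord N) = y ord_max by congr (y _); apply: val_inj; rewrite /= inordK.
by [].
Qed.

Lemma sum_delta_nat (F : T -> nat) s : (\sum_(t : T) ((t == s) * F t) = F s)%N.
Proof.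
by rewrite (bigD1 s) //= eqxx mul1n big1 ?addn0 // => t /negPf ->.
Qed.

Lemma pathcountS N r (s : T) : pathcount K N.+1 r s =
  (\sum_(t : T) pathcount K N r t * adjb t s)%N.
Proof.
rewrite pathcountE (reindex _ (onW_bij _ (@ext_bij N))) /=.
rewrite -(pair_bigA _ (fun y t => [&& val (ext y t ord0) == r,
   val (ext y t ord_max) == s & steps (ext y t)] : nat)) /=.
under eq_bigr => y _.
  under eq_bigr => t _.
    rewrite steps_ext /ext !ffunE /= ltnn.
    have -> : y (inord 0) = y ord0 by congr (y _); apply: val_inj; rewrite /= inordK.
    over.
  over.
simpl.
have E1 (y : {ffun 'I_N.+1 -> T}) : (\sum_(t < K.+1) [&& y ord0 == r :> nat, t == s :> nat, steps y & adjb (y ord_max) t])%N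
   = [&& y ord0 == r :> nat, steps y & adjb (y ord_max) s].
  rewrite (bigD1 s) //= eqxx big1 ?addn0 //.
  by move=> t; rewrite val_eqE => /negPf ->; rewrite andbF.
under eq_bigr => y _ do rewrite E1.
symmetry.
under eq_bigr => t _ do rewrite pathcountE big_distrl /=.
rewrite exchange_big /=; apply: eq_bigr => y _.
case: (y ord0 == r :> nat) => //=; last by rewrite big1.
case: (steps y); last by rewrite big1 // => i _; rewrite andbF.
under eq_bigr => i _ do rewrite andbT.
rewrite (bigD1 (y ord_max)) //= eqxx mul1n big1 ?addn0 //.
by move=> t /negPf; rewrite eq_sym -val_eqE /= => ->.
Qed.

Lemma pathcount0 (r s : T) : pathcount K 0 r s = (r == s).
Proof.
rewrite pathcountE.
have hst (y : {ffun 'I_1 -> T}) : steps y = true by apply/forallP => -[].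
have hm (y : {ffun 'I_1 -> T}) : y ord_max = y ord0 by congr (y _); apply: val_inj.
under eq_bigr => y _ do rewrite hst hm andbT.
rewrite (bigD1 [ffun => r]) //= !ffunE eqxx /= big1 ?addn0.
  by rewrite val_eqE.
move=> y hy; apply/eqP; rewrite eqb0 negb_and; apply/orP; left.
apply: contra hy; rewrite val_eqE => /eqP hy; apply/eqP/ffunP => i.
by rewrite ffunE ord1.
Qed.

Lemma transfer_adj (t s : T) : transfer K t s = (adjb t s)%:R.
Proof. by rewrite mxE /adjb; case: ifP. Qed.

Lemma pathcount_pow N (r s : T) : ((pathcount K N r s)%:R : rat) = (transfer K ^+ N) r s.
Proof.
elim: N r s => [|N IH] r s.
  by rewrite pathcount0 expr0 mxE.
rewrite pathcountS exprSr -mulmxE mxE natr_sum; apply: eq_bigr => t _.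
by rewrite natrM IH transfer_adj.
Qed.
Lemma band0 N (i j : T) : (i + N < j)%N -> (transfer K ^+ N) i j = 0.
Proof.
elim: N j => [|N IH] j hij.
  have hne : (i : nat) <> j by lia.
  rewrite expr0 mxE (_ : (i == j) = false) //; apply/negbTE; rewrite -val_eqE; exact/eqP.
rewrite exprSr -mulmxE mxE; apply: big1 => l _; rewrite transfer_adj /adjb.
case h: (_ || _); last by rewrite mulr0.
by rewrite IH ?mul0r //; case/orP: h => /eqP; lia.
Qed.

Lemma band1 N (i j : T) : (i + N = j)%N -> (transfer K ^+ N) i j = 1.
Proof.
elim: N j => [|N IH] j hij.
  by rewrite expr0 mxE addn0 in hij *; rewrite (_ : i = j) ?eqxx //; apply: val_inj.
have hj : (j.-1 < K.+1)%N by have := ltn_ord j; lia.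
rewrite exprSr -mulmxE mxE (bigD1 (Ordinal hj)) //= big1.
  rewrite IH /=; last by lia.
  by rewrite transfer_adj /adjb /= (_ : j.-1.+1 == j) ?addr0 ?mul1r //; apply/eqP; lia.
move=> l hl; rewrite transfer_adj /adjb.
case h: (_ || _); last by rewrite mulr0.
have hl' : (l : nat) <> j.-1 by move=> e; move: hl; rewrite -val_eqE /= e eqxx.
by rewrite band0 ?mul0r //; case/orP: h => /eqP; lia.
Qed.
End Paths.

Lemma det_shift p (a : int -> rat) (L G : 'M[rat]_p) (y : int -> 'cV[rat]_p)
  (hL : forall c (i : 'I_p), a (c - (i : nat)%:Z) = (L *m y c) i 0)
  (hy : forall c, y (c + 1) = G *m y c) (hG : \det G = 1) (c : nat -> int) (n : nat) :
  \det (\matrix_(i < p, j < p) a (c j + n%:Z - (i : nat)%:Z))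
  = \det (\matrix_(i < p, j < p) a (c j - (i : nat)%:Z)).
Proof.
pose Y (e : nat -> int) := \matrix_(x < p, j < p) y (e j) x 0.
have HV (e : nat -> int) : \matrix_(i < p, j < p) a (e j - (i : nat)%:Z) = L *m Y e.
  by apply/matrixP => i j; rewrite !mxE hL !mxE; apply: eq_bigr => x _; rewrite mxE.
have HY : forall n, \det (Y (fun j => c j + n%:Z)) = \det (Y c).
  elim=> [|m IH].
    by congr (\det _); apply/matrixP => i j; rewrite !mxE addr0.
  rewrite -IH (_ : Y _ = G *m Y (fun j => c j + m%:Z)) ?det_mulmx ?hG ?mul1r //.
  apply/matrixP => i j; rewrite !mxE.
  have -> : c j + m.+1%:Z = (c j + m%:Z) + 1 by lia.
  by rewrite hy !mxE; apply: eq_bigr => x _; rewrite mxE.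
rewrite (HV (fun j => c j + n%:Z)) HV !det_mulmx HY.
by [].
Qed.

Lemma det_size p q (e : p = q) (f : nat -> nat -> rat) :
  \det (\matrix_(i < p, j < p) f i j) = \det (\matrix_(i < q, j < q) f i j).
Proof. by case: q / e. Qed.

Lemma det_lblock' k m (X : 'M[rat]_(k + m)) :
  (forall i j : 'I_(k + m), (i < k)%N -> (k <= j)%N -> X i j = 0) ->
  \det X = \det (\matrix_(i < k, j < k) X (lshift m i) (lshift m j)) *
           \det (\matrix_(i < m, j < m) X (rshift k i) (rshift k j)).
Proof.
move=> H.
have Z : ursubmx X = 0.
  apply/matrixP => i j; rewrite !mxE H //= ?leq_addr //.
have E : X = block_mx (ulsubmx X) 0 (dlsubmx X) (drsubmx X) by rewrite -Z submxK.
rewrite {1}E det_lblock; congr (_ * _); congr (\det _); apply/matrixP => i j; rewrite !mxE //.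
Qed.

Lemma det_ublock' k m (X : 'M[rat]_(k + m)) :
  (forall i j : 'I_(k + m), (k <= i)%N -> (j < k)%N -> X i j = 0) ->
  \det X = \det (\matrix_(i < k, j < k) X (lshift m i) (lshift m j)) *
           \det (\matrix_(i < m, j < m) X (rshift k i) (rshift k j)).
Proof.
move=> H.
have Z : dlsubmx X = 0.
  apply/matrixP => i j; rewrite !mxE H //= ?leq_addr //.
have E : X = block_mx (ulsubmx X) (ursubmx X) 0 (drsubmx X) by rewrite -Z submxK.
rewrite {1}E det_ublock; congr (_ * _); congr (\det _); apply/matrixP => i j; rewrite !mxE //.
Qed.

Lemma det_lower p (f : nat -> nat -> rat) c :
  (forall i j, (i < j < p)%N -> f i j = 0) -> (forall i, (i < p)%N -> f i i = c) ->
  \det (\matrix_(i < p, j < p) f i j) = c ^+ p.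
Proof.
move=> H0 H1; rewrite det_trig.
  rewrite (eq_bigr (fun _ => c)) ?prodr_const ?card_ord // => i _.
  by rewrite mxE H1.
by apply/is_trig_mxP => i j hij; rewrite mxE H0 // hij ltn_ord.
Qed.

Lemma sum_split_nat (G : nat -> rat) n :
  \sum_(0 <= l < n.*2) G l = \sum_(0 <= x < n) G (x.*2) + \sum_(0 <= x < n) G (x.*2.+1).
Proof.
elim: n => [|n IH]; first by rewrite !big_geq.
rewrite doubleS !big_nat_recr //= IH; ring.
Qed.

Lemma ord_eqE n (a b : 'I_n) : (a == b) = (a == b :> nat). Proof. by []. Qed.

Section Z.
Variable d' : nat.
Local Notation d := d'.+1.
Local Notation K := d'.*2.+1.

Lemma sum_split (F : 'I_K.+1 -> rat) :
  \sum_(l < K.+1) F l = \sum_(x < d) F (inord x.*2) + \sum_(x < d) F (inord x.*2.+1).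
Proof.
have -> : \sum_(l < K.+1) F l = \sum_(l < K.+1) F (inord l).
  by apply: eq_bigr => l _; rewrite inord_val.
rewrite -(big_mkord xpredT (fun l => F (inord l))) (_ : K.+1 = d.*2) //.
by rewrite sum_split_nat !big_mkord.
Qed.

Definition zmat (X Y : 'M[rat]_d) : 'M[rat]_K.+1 :=
  \matrix_(i, j) if odd j && ~~ odd i then X (inord i./2) (inord j./2)
                 else if odd i && ~~ odd j then Y (inord i./2) (inord j./2) else 0.
Definition wmat (P Q : 'M[rat]_d) : 'M[rat]_K.+1 :=
  \matrix_(i, j) if ~~ odd i && ~~ odd j then P (inord i./2) (inord j./2)
                 else if odd i && odd j then Q (inord i./2) (inord j./2) else 0.

Lemma inord_even (x : 'I_d) : ((inord x.*2 : 'I_K.+1) : nat) = x.*2.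
Proof. by rewrite inordK //; have := ltn_ord x; lia. Qed.
Lemma inord_odd (x : 'I_d) : ((inord x.*2.+1 : 'I_K.+1) : nat) = x.*2.+1.
Proof. by rewrite inordK //; have := ltn_ord x; lia. Qed.
Lemma half_even (x : 'I_d) : (inord (x.*2)./2 : 'I_d) = x.
Proof. by rewrite doubleK inord_val. Qed.
Lemma half_odd (x : 'I_d) : (inord (x.*2.+1)./2 : 'I_d) = x.
Proof. by rewrite -[x.*2.+1]/((true : nat) + x.*2)%N half_bit_double inord_val. Qed.

Lemma sum0l n (F : 'I_n -> rat) : \sum_(x < n) 0 * F x = 0.
Proof. by rewrite big1 // => x _; rewrite mul0r. Qed.
Lemma sum0r n (F : 'I_n -> rat) : \sum_(x < n) F x * 0 = 0.
Proof. by rewrite big1 // => x _; rewrite mulr0. Qed.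

Lemma mulzz X Y X' Y' : zmat X Y * zmat X' Y' = wmat (X * Y') (Y * X').
Proof.
apply/matrixP => i j; rewrite -mulmxE !mxE sum_split.
under eq_bigr => x _ do rewrite !mxE inord_even odd_double half_even /=.
under [X in _ + X]eq_bigr => x _ do rewrite !mxE inord_odd /= odd_double half_odd /=.
case: (odd i); case: (odd j) => /=; rewrite ?sum0l ?sum0r ?addr0 ?add0r //.
Qed.
Lemma mulwz P Q X Y : wmat P Q * zmat X Y = zmat (P * X) (Q * Y).
Proof.
apply/matrixP => i j; rewrite -mulmxE !mxE sum_split.
under eq_bigr => x _ do rewrite !mxE inord_even odd_double half_even /=.
under [X in _ + X]eq_bigr => x _ do rewrite !mxE inord_odd /= odd_double half_odd /=.
case: (odd i); case: (odd j) => /=; rewrite ?sum0l ?sum0r ?addr0 ?add0r //.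
Qed.

Lemma wmat11 : wmat 1 1 = 1.
Proof.
apply/matrixP => i j; rewrite !mxE.
have hi := odd_double_half i; have hj := odd_double_half j.
have hi2 : (i./2 < d)%N by have := ltn_ord i; lia.
have hj2 : (j./2 < d)%N by have := ltn_ord j; lia.
rewrite ord_eqE /= -(inj_eq val_inj) /= !inordK //.
case oi: (odd i); case oj: (odd j) => /=; rewrite ?oi ?oj /= in hi hj.
- congr (_%:R); apply/eqP/eqP; lia.
- apply/esym/eqP; rewrite pnatr_eq0 eqb0; apply/eqP; lia.
- apply/esym/eqP; rewrite pnatr_eq0 eqb0; apply/eqP; lia.
- congr (_%:R); apply/eqP/eqP; lia.
Qed.

Definition Mm : 'M[rat]_d := \matrix_(x, w) if ((w : nat) == x) || (w.+1 == x) then 1 else 0.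

Lemma transferE : transfer K = zmat Mm Mm^T.
Proof.
apply/matrixP => i j; rewrite !mxE.
have hi := odd_double_half i; have hj := odd_double_half j.
have hi2 : (i./2 < d)%N by have := ltn_ord i; lia.
have hj2 : (j./2 < d)%N by have := ltn_ord j; lia.
rewrite ?mxE !inordK //.
case oi: (odd i); case oj: (odd j) => /=; rewrite ?oi ?oj /= in hi hj;
  repeat case: ifP => ?; try done; exfalso; lia.
Qed.
Definition Minv : 'M[rat]_d := \matrix_(x, w) if (w <= x)%N then (-1) ^+ (x - w) else 0.

Lemma Mm_Minv : Mm * Minv = 1.
Proof.
apply/matrixP => x w; rewrite -mulmxE !mxE (bigD1 x) //= !mxE eqxx /= mul1r.
case: (posnP x) => hx.
  rewrite big1 ?addr0; last first.
    move=> l hl; rewrite !mxE (_ : (l == x :> nat) || (l.+1 == x) = false) ?mul0r //.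
    by apply/negbTE; rewrite negb_or -ord_eqE hl /=; apply/eqP; lia.
  rewrite ord_eqE /= hx; case: (posnP w) => hw; first by rewrite hw subnn expr0.
  rewrite ifF; last by lia.
  by rewrite eq_sym gtn_eqF.
have hx1 : (x.-1 < d)%N by have := ltn_ord x; lia.
rewrite (bigD1 (inord x.-1)) /=; last by rewrite ord_eqE /= inordK //; apply/eqP; lia.
rewrite big1 ?addr0; last first.
  move=> l /andP [hl1 hl2]; rewrite !mxE (_ : (l == x :> nat) || (l.+1 == x) = false) ?mul0r //.
  have h1 : (l : nat) <> x by move=> e; move: hl1; rewrite ord_eqE e eqxx.
  have h2 : (l : nat) <> x.-1 by move=> e; move: hl2; rewrite ord_eqE inordK // e eqxx.
  by apply/negbTE; rewrite negb_or; apply/andP; split; apply/eqP; lia.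
rewrite !mxE inordK // (_ : (x.-1 == x :> nat) = false) /=; last by apply/eqP; lia.
rewrite (_ : x.-1.+1 == x) ?mul1r; last by apply/eqP; lia.
rewrite ord_eqE /=.
case: (ltngtP w x) => hwx.
- rewrite ifT; last by lia.
  rewrite (_ : (x - w = (x.-1 - w).+1)%N); last by lia.
  by rewrite exprS mulN1r addNr.
- by rewrite ifF ?addr0 //; lia.
- rewrite ifF; last by lia.
  by rewrite hwx subnn expr0 addr0.
Qed.

Lemma Mm_unit : Mm \is a GRing.unit.
Proof. by case: (mulmx1_unit Mm_Minv). Qed.

Lemma MmV : Mm^-1 = Minv.
Proof. by rewrite -[Minv](mulKr Mm_unit) Mm_Minv mulr1. Qed.
Lemma zpow X Y t : zmat X Y ^+ t.*2.+1 = zmat (X * (Y * X) ^+ t) (Y * (X * Y) ^+ t).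
Proof.
elim: t => [|t IH]; first by rewrite !expr0 !mulr1 expr1.
rewrite doubleS exprSr (exprSr _ (t.*2.+1)) IH mulzz mulwz !exprSr !mulrA.
by [].
Qed.

Lemma comm_pow (X Y : 'M[rat]_d) t : X * (Y * X) ^+ t = (X * Y) ^+ t * X.
Proof.
elim: t => [|t IH]; first by rewrite !expr0 mulr1 mul1r.
by rewrite exprSr mulrA IH exprSr !mulrA.
Qed.

Lemma zmat_entry X Y : zmat X Y (inord 0) (inord K) = X (inord 0) (inord d').
Proof.
rewrite mxE !inordK // /= odd_double /=.
by rewrite uphalf_double.
Qed.

Lemma MmT_unit : Mm^T \is a GRing.unit.
Proof. by rewrite unitmx_tr; exact: Mm_unit. Qed.

Definition Ainv := zmat (Mm^T)^-1 Mm^-1.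

Lemma A_Ainv : transfer K * Ainv = 1.
Proof.
by rewrite transferE /Ainv mulzz mulrV ?Mm_unit // mulrV ?MmT_unit // wmat11.
Qed.

Lemma A_unit : transfer K \in unitmx.
Proof. by case: (mulmx1_unit A_Ainv). Qed.

Lemma invA : invmx (transfer K) = Ainv.
Proof.
have U : transfer K \is a GRing.unit by exact: A_unit.
by rewrite -[Ainv](mulKr U) A_Ainv mulr1.
Qed.

Definition Bm := Mm * Mm^T.

Lemma Bm_unit : Bm \is a GRing.unit.
Proof. by rewrite /Bm unitrMl ?MmT_unit ?Mm_unit. Qed.

Lemma Codd (r : int) : C K (2 * r + 1) 0 K = ((Bm ^ r) * Mm) (inord 0) (inord d').
Proof.
case: r => [t|s].
  have -> : (2 * Posz t + 1 = Posz (t.*2.+1))%R by lia.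
  rewrite /C; have := pathcount_pow (t.*2.+1) (inord 0 : 'I_K.+1) (inord K); rewrite !inordK // => ->.
  by rewrite transferE zpow zmat_entry comm_pow.
have -> : (2 * Negz s + 1 = Negz (s.*2))%R by rewrite !NegzE; lia.
rewrite /C invA /Ainv zpow zmat_entry comm_pow.
congr (_ _ _).
have -> : Bm ^ Negz s = (Bm^-1) ^+ s.+1 by rewrite NegzE -exprz_inv.
rewrite /Bm invrM ?Mm_unit ?MmT_unit // exprSr -!mulrA mulVr ?Mm_unit ?mulr1 //.
Qed.
Lemma det_Mm : \det Mm = 1.
Proof.
rewrite /Mm (det_lower (c := 1) (f := fun x w => if (w == x) || (w.+1 == x) then 1 else 0)) ?expr1n //.
  by move=> i j /andP [hij _]; rewrite ifF //; apply/negbTE; rewrite negb_or; apply/andP; split; apply/eqP; lia.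
by move=> i _; rewrite eqxx.
Qed.

Lemma det_Bm : \det Bm = 1.
Proof. by rewrite /Bm -mulmxE det_mulmx det_tr det_Mm mulr1. Qed.

Definition a (t : int) : rat := D K (2 * t).

Lemma aE t : a t = ((Bm ^ (t + d'%:Z)) * Mm) (inord 0) (inord d').
Proof.
rewrite /a /D -Codd; congr (C _ _ _ _); rewrite -muln2; lia.
Qed.

Lemma det_shift_a (c : nat -> int) (n : nat) :
  \det (\matrix_(i < d, j < d) a (c j + n%:Z - (i : nat)%:Z))
  = \det (\matrix_(i < d, j < d) a (c j - (i : nat)%:Z)).
Proof.
apply: (@det_shift d a (\matrix_(i < d, x < d) (Bm ^ (- (i : nat)%:Z)) (inord 0) x) Bm
          (fun c => \col_x ((Bm ^ (c + d'%:Z)) * Mm) x (inord d'))).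
- move=> e i; rewrite aE.
  rewrite (_ : e - (i : nat)%:Z + d'%:Z = (- (i : nat)%:Z) + (e + d'%:Z)); last by lia.
  rewrite [Bm ^ (- _ + _)]exprzDr ?Bm_unit // -mulrA -!mulmxE !mxE.
  by apply: eq_bigr => x _; rewrite !mxE.
- move=> e; apply/matrixP => x j; rewrite !ord1 [LHS]mxE.
  rewrite (_ : e + 1 + d'%:Z = 1 + (e + d'%:Z)); last by lia.
  rewrite [Bm ^ (1 + _)]exprzDr ?Bm_unit // expr1z -mulrA.
  change ((Bm *m (Bm ^ (e + d'%:Z) * Mm)) x (inord d') = (Bm *m \col_x ((Bm ^ (e + d'%:Z)) * Mm) x (inord d')) x 0).
  by rewrite !mxE; apply: eq_bigr => l _; rewrite [X in _ = _ * X]mxE.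
- exact det_Bm.
Qed.
Lemma aPos (r : nat) : a (r%:Z - d'%:Z) = (transfer K ^+ r.*2.+1) (inord 0) (inord K).
Proof.
rewrite /a /D (_ : 2 * (r%:Z - d'%:Z) + (K : int) = Posz (r.*2.+1)); last by rewrite -!muln2; lia.
rewrite /C; have := pathcount_pow (r.*2.+1) (inord 0 : 'I_K.+1) (inord K).
by rewrite !inordK // => ->.
Qed.

Lemma a_zero t : -(d'%:Z) <= t <= -1 -> a t = 0.
Proof.
move=> /andP [h1 h2].
have [r [-> hr]] : exists r : nat, t = r%:Z - d'%:Z /\ (r < d')%N.
  exists (absz (t + d'%:Z)); lia.
rewrite aPos band0 // !inordK //; rewrite -!muln2; lia.
Qed.

Lemma a_one : a 0 = 1.
Proof.
have -> : (0 : int) = d'%:Z - d'%:Z by rewrite subrr.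
rewrite aPos band1 // !inordK //.
Qed.

Lemma a_md : a (- (d'.+1)%:Z) = (-1) ^+ d'.
Proof.
rewrite aE (_ : - (d'.+1)%:Z + d'%:Z = - 1); last by lia.
rewrite -exprz_inv expr1z /Bm invrM ?Mm_unit ?MmT_unit // divrK ?Mm_unit //.
change ((invmx Mm^T) (inord 0) (inord d') = (-1) ^+ d').
rewrite -trmx_inv mxE.
change ((Mm^-1) (inord d') (inord 0) = (-1) ^+ d').
rewrite MmV mxE !inordK // leq0n subn0.
by [].
Qed.
End Z.

Theorem theorem18 (n k m : nat) (hk : (0 < k)%N) (hm : (0 < m)%N) :
  \det (\matrix_(i < k, j < k)
          D (2 * k + 2 * m - 1)%N
            (2 * (n : int) + 2 * ((j : nat) : int) - 2 * ((i : nat) : int)))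
  = (-1) ^+ (k * m) *
    \det (\matrix_(i < m, j < m)
          D (2 * k + 2 * m - 1)%N
            (- 2 * (n : int) - 2 * ((j : nat) : int) + 2 * ((i : nat) : int)
             - 2 * (k : int) - 2 * (m : int))).
Proof.
set d' := (k + m).-1.
have ed : (k + m)%N = d'.+1 by rewrite /d'; lia.
have eK : (2 * k + 2 * m - 1)%N = d'.*2.+1 by rewrite /d' -muln2; lia.
rewrite eK.
set T := \det (\matrix_(i < k, j < k) a d' (n%:Z + (j : nat)%:Z - (i : nat)%:Z)).
pose S (q : nat) := \det (\matrix_(i < m, j < m)
   a d' ((j : nat)%:Z - (i : nat)%:Z - (m : int) - (k : int) - q%:Z)).
have -> : \det (\matrix_(i < k, j < k) D d'.*2.+1 (2 * (n : int) + 2 * ((j : nat) : int) - 2 * ((i : nat) : int))) = T.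
  by congr (\det _); apply/matrixP => i j; rewrite !mxE /a; congr (D _ _); lia.
have -> : \det (\matrix_(i < m, j < m) D d'.*2.+1
            (- 2 * (n : int) - 2 * ((j : nat) : int) + 2 * ((i : nat) : int)
             - 2 * (k : int) - 2 * (m : int))) = S n.
  rewrite -det_tr; congr (\det _); apply/matrixP => i j; rewrite !mxE /a; congr (D _ _); lia.
pose c2 := fun j : nat => if (j < k)%N then (j : int) else (j : int) - (k : int) - (m : int) - n%:Z.
have h12 : \det (\matrix_(i < k + m, j < k + m) a d' (c2 j + n%:Z - (i : nat)%:Z))
         = \det (\matrix_(i < k + m, j < k + m) a d' (c2 j - (i : nat)%:Z)).
  rewrite (det_size ed (fun i j => a d' (c2 j + n%:Z - i%:Z))) det_shift_a.
  by rewrite -(det_size ed (fun i j => a d' (c2 j - i%:Z))).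
have h1 : \det (\matrix_(i < k + m, j < k + m) a d' (c2 j + n%:Z - (i : nat)%:Z)) = T * S 0.
  rewrite det_lblock'.
    congr (_ * _); congr (\det _); apply/matrixP => i j; rewrite !mxE /c2 /=.
      by rewrite ifT ?ltn_ord //; congr (a _ _); lia.
    by rewrite ifF; [congr (a _ _) | ]; lia.
  move=> i j hi hj; rewrite mxE /c2 ifF; last by lia.
  by apply: a_zero; have := ltn_ord j; lia.
have h2 : \det (\matrix_(i < k + m, j < k + m) a d' (c2 j - (i : nat)%:Z))
   = \det (\matrix_(i < k, j < k) a d' ((j : nat)%:Z - (i : nat)%:Z)) * S n.
  rewrite det_ublock'.
    congr (_ * _); congr (\det _); apply/matrixP => i j; rewrite !mxE /c2 /=.
      by rewrite ifT ?ltn_ord.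
    by rewrite ifF; [congr (a _ _) | ]; lia.
  move=> i j hi hj; rewrite mxE /c2 ifT //.
  by apply: a_zero; have := ltn_ord i; lia.
have hT0 : \det (\matrix_(i < k, j < k) a d' ((j : nat)%:Z - (i : nat)%:Z)) = 1.
  rewrite -det_tr.
  rewrite (_ : _^T = \matrix_(i < k, j < k) a d' ((i : nat)%:Z - (j : nat)%:Z)); last first.
    by apply/matrixP => i j; rewrite !mxE.
  rewrite (det_lower (c := 1) (f := fun i j : nat => a d' (i%:Z - j%:Z))) ?expr1n //.
    by move=> i j hij; apply: a_zero; lia.
  by move=> i _; rewrite subrr a_one.
have hS0 : S 0 = ((-1) ^+ d') ^+ m.
  rewrite /S (det_lower (c := (-1) ^+ d') (f := fun i j : nat => a d' (j%:Z - i%:Z - (m : int) - (k : int) - 0%:Z))) //.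
    by move=> i j hij; apply: a_zero; lia.
  by move=> i _; rewrite -a_md; congr (a _ _); lia.
have key : T * ((-1) ^+ d') ^+ m = S n by rewrite -hS0 -h1 h12 h2 hT0 mul1r.
rewrite -key mulrCA -exprM -exprD -signr_odd.
have -> : odd (k * m + d' * m) = false.
  rewrite -mulnDl oddM; case om: (odd m); rewrite ?andbF //.
  have hm2 := odd_double_half m; rewrite om in hm2.
  have -> : (k + d')%N = (k + m./2).*2 by rewrite /d'; lia.
  by rewrite odd_double.
by rewrite expr0 mulr1.
Qed.
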